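(* Let $q \in \mathbb{N}$ and let $f\colon [0,1]\times[0,1]\to\mathbb{R}_+$ be a positive definite function on $[0,1]$. Let $0 = t_1 < t_2 < \dots < t_\ell = 1$ be anchor points and let $A_1,\dots,A_\ell \in \mathbb{R}^{q\times q}$ be symmetric positive definite matrices. For each $t\in[0,1]$ define $B_t\in\mathbb{R}^{q\times q}$ as the unique positive definite matrix satisfying $$B_t^\top B_t = \frac{t_{k+1}-t}{t_{k+1}-t_k}A_k + \frac{t-t_k}{t_{k+1}-t_k}A_{k+1} \quad \text{for } t\in[t_k,t_{k+1}].$$ For all $s,t\in[0,1]$ define $K(s,t) = f(s,t)\, B_s^\top B_t \in \mathbb{R}^{q\times q}$. Then the matrix-valued function $K\colon[0,1]\times[0,1]\to\mathbb{R}^{q\times q}$ is positive definite.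
   Context: A function $f\colon[0,1]\times[0,1]\to\mathbb{R}$ is positive definite if for every finite collection $s_1,\dots,s_m\in[0,1]$ the matrix $(f(s_i,s_j))_{i,j=1}^m$ is positive definite. A matrix-valued function $K\colon[0,1]\times[0,1]\to\mathbb{R}^{q\times q}$ is positive definite if for every finite collection $s_1,\dots,s_m\in[0,1]$ the block matrix $(K(s_i,s_j))_{i,j=1}^m\in\mathbb{R}^{qm\times qm}$ is positive definite. *)

(* Defs.v *)
From HB Require Import structures.
From mathcomp Require Import all_boot all_order all_algebra.
From mathcomp Require Import reals.
Set Implicit Arguments. Unset Strict Implicit. Unset Printing Implicit Defensive.
Import Order.TTheory GRing.Theory Num.Theory.
Local Open Scope ring_scope.

Definition posdef_mx (R : numDomainType) (n : nat) (M : 'M[R]_n) : Prop :=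
  M^T = M /\ forall x : 'cV[R]_n, x != 0 -> 0 < (x^T *m M *m x) 0 0.

Definition posdef_fun (R : realType) (f : R -> R -> R) : Prop :=
  forall (m : nat) (s : 'I_m -> R),
    (forall i, 0 <= s i <= 1) -> injective s ->
    posdef_mx (\matrix_(i < m, j < m) f (s i) (s j)).

Definition posdef_mxfun (R : realType) (q : nat) (K : R -> R -> 'M[R]_q) : Prop :=
  forall (m : nat) (s : 'I_m -> R),
    (forall i, 0 <= s i <= 1) -> injective s ->
    posdef_mx (\mxblock_(i < m, j < m) K (s i) (s j)).

(* Main.v *)
Require Import Defs.
From HB Require Import structures.
From mathcomp Require Import all_boot all_order all_algebra.
From mathcomp Require Import reals ring.
Import Order.TTheory GRing.Theory Num.Theory.
Local Open Scope ring_scope.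

Lemma qform (R : comPzRingType) n (u v : 'cV[R]_n) (M : 'M_n) :
  (u^T *m M *m v) 0 0 = \sum_i \sum_j u i 0 * M i j * v j 0.
Proof.
rewrite !mxE; under eq_bigr => j _ do rewrite !mxE big_distrl /=.
rewrite exchange_big /=; apply: eq_bigr => i _; apply: eq_bigr => j _.
by rewrite !mxE.
Qed.

(* Anchors t_0 < ... < t_(l-1) (0-indexed), t_0 = 0, t_(l-1) = 1. *)
Theorem proposition1 (R : realType) (q : nat) (f : R -> R -> R)
  (l : nat) (t : nat -> R) (A : nat -> 'M[R]_q) (B : R -> 'M[R]_q) :
  (forall s u, 0 <= s <= 1 -> 0 <= u <= 1 -> 0 <= f s u) ->
  posdef_fun f ->
  (1 < l)%N ->
  t 0%N = 0 -> t l.-1 = 1 ->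
  (forall k, (k.+1 < l)%N -> t k < t k.+1) ->
  (forall k, (k < l)%N -> posdef_mx (A k)) ->
  (forall s, 0 <= s <= 1 -> posdef_mx (B s)) ->
  (forall k s, (k.+1 < l)%N -> t k <= s <= t k.+1 ->
     (B s)^T *m B s =
       ((t k.+1 - s) / (t k.+1 - t k)) *: A k
       + ((s - t k) / (t k.+1 - t k)) *: A k.+1) ->
  posdef_mxfun (fun s u => f s u *: ((B s)^T *m B u)).
Proof.
move=> fge0 fpd _ _ _ _ _ Bpd _ m s s01 sinj.
have [FT Fpos] := fpd m s s01 sinj.
have fsym : forall i j, f (s j) (s i) = f (s i) (s j).
  by move=> i j; move/matrixP: FT => /(_ i j); rewrite !mxE.
split.
  rewrite tr_mxblock; apply: eq_mxblock => i j.
  by rewrite linearZ /= trmx_mul trmxK fsym.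
move=> x x0.
pose xs i := @submxcol _ m (fun _ => q) 1 x i.
have Ex : x = \mxcol_i xs i by rewrite submxcolK.
pose y i := B (s i) *m xs i.
pose z (k : 'I_q) : 'cV[R]_m := \col_i (y i k 0).
have -> : (x^T *m (\mxblock_(i < m, j < m) (f (s i) (s j) *: ((B (s i))^T *m B (s j)))) *m x) 0 0
   = \sum_k ((z k)^T *m (\matrix_(i < m, j < m) f (s i) (s j)) *m z k) 0 0.
  rewrite Ex tr_mxcol mul_mxrow_mxblock mul_mxrow_mxcol summxE.
  under eq_bigr => j _ do rewrite mulmx_suml summxE.
  have term : forall i j, ((xs i)^T *m (f (s i) (s j) *: ((B (s i))^T *m B (s j))) *m xs j) 0 0
     = \sum_k f (s i) (s j) * (y i k 0 * y j k 0).
    move=> i j; rewrite -scalemxAr -scalemxAl mxE -mulmxA -mulmxA mulmxA -trmx_mul.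
    rewrite mxE big_distrr /=; apply: eq_bigr => k _; by rewrite mxE.
  under eq_bigr => j _ do under eq_bigr => i _ do rewrite term.
  rewrite exchange_big /=.
  under [RHS]eq_bigr => k _ do rewrite qform.
  rewrite [RHS]exchange_big /=; apply: eq_bigr => i _.
  rewrite [RHS]exchange_big /=; apply: eq_bigr => j _.
  apply: eq_bigr => k _; rewrite !mxE; ring.
have ge0 : forall k, 0 <= ((z k)^T *m (\matrix_(i < m, j < m) f (s i) (s j)) *m z k) 0 0.
  move=> k; have [->|nz] := eqVneq (z k) 0.
    by rewrite mulmx0 mxE.
  exact: ltW (Fpos _ nz).
have [i0 Hi0] : exists i, xs i != 0.
  apply/existsP; apply: contraNT x0 => /existsPn H; rewrite Ex; apply/eqP.
  rewrite -(mxcol0 (p_ := fun _ : 'I_m => q)); apply: eq_mxcol => i.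
  by move: (H i); rewrite negbK => /eqP.
have Hy : y i0 != 0.
  apply/eqP => Hy0; move/eqP: Hi0; apply; apply/eqP/negP => Hxs.
  have [_ Bp] := Bpd (s i0) (s01 i0).
  move: (Bp _ (introN idP Hxs)); rewrite -mulmxA -/(y i0) Hy0 mulmx0 mxE ltxx.
  by [].
have [k0 Hk0] : exists k, y i0 k 0 != 0.
  apply/existsP; apply: contraNT Hy => /existsPn H; apply/eqP/matrixP => k j.
  by move: (H k); rewrite negbK (ord1 j) => /eqP ->; rewrite mxE.
have Hz : z k0 != 0.
  apply/eqP => Hz0; move/eqP: Hk0; apply; have := congr1 (fun M : 'cV[R]_m => M i0 0) Hz0.
  by rewrite !mxE => ->.
rewrite (bigD1 k0) //=; apply: ltr_wpDr; first by apply: sumr_ge0 => k _; exact: ge0.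
exact: Fpos.
Qed.
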